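(* In the setting described in the context, with $\phi_1(0),\phi_2(0)>0$, one has $y_1'(x)>0$ for all $x\in(0,1)$. Moreover, if $\phi_1(0)<1$, $\phi_1(0)\phi_2(0)<1$ and $1<\phi_1(0)+\phi_1(0)\phi_2(0)$, then $y_2'$, $y_3'$ and $y_2'+y_3'$ have no zeroes on $(0,1)$; that is, $K$, $\phi_1$, $\phi_2$ and $\phi_1\phi_2$ are monotonic on $(0,1)$.
   Context: Setting: $(M^4,g)$ is a Hadamard manifold (complete, simply connected, non-positive sectional curvature) which is conformally compact Einstein ($\mathrm{Ric}_g=-3g$, and $x^2g$ extends continuously to $\overline M$ for a boundary defining function $x$) with conformal infinity $(\mathbb{S}^3,[\hat g])$, $\hat g=\lambda_1\sigma_1^2+\lambda_2\sigma_2^2+\lambda_3\sigma_3^2$, where $\sigma_i$ are the standard left-invariant $1$-forms on $\mathrm{SU}(2)\cong\mathbb{S}^3$ and $\lambda_1,\lambda_2,\lambda_3>0$ are pairwise distinct. The conformal Killing fields of $\hat g$ extend to Killing fields of $g$ having a common fixed point $p_0\in M$ (the center of gravity); with $r$ the distance to $p_0$, $x=e^{-r}$ is a geodesic defining function, and along a geodesic ray $\theta=\theta_0$ from $p_0$, in polar coordinates $(x,\theta^1,\theta^2,\theta^3)$ with $d\theta^i=\sigma_i$ at $\theta_0$, one has $g=x^{-2}\big(dx^2+\tfrac{(1-x^2)^2}{4}\bar h\big)$ with $\bar h=I_1(d\theta^1)^2+I_2(d\theta^2)^2+I_3(d\theta^3)^2$, where $I_i\in C^\infty([0,1])$ are positive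 with $I_i(1)=1$. Set $K=I_1I_2I_3$, $\phi_1=I_2/I_1$, $\phi_2=I_3/I_2$, $y_1=\log K$, $y_2=\log\phi_1$, $y_3=\log\phi_2$. Then $K(0)<1$ and $(y_1,y_2,y_3)$ satisfy on $[0,1]$: $y_1''-x^{-1}(1+3x^2)(1-x^2)^{-1}y_1'+\frac16(y_1')^2+\frac13[(y_2')^2+y_2'y_3'+(y_3')^2]=0$; $y_1''-x^{-1}(5+7x^2)(1-x^2)^{-1}y_1'+\frac12(y_1')^2+16(1-x^2)^{-2}(3-\Upsilon)=0$ with $\Upsilon=K^{-1/3}[2(\phi_1^2\phi_2)^{1/3}+2(\phi_1^{-1}\phi_2)^{1/3}+2(\phi_1\phi_2^2)^{-1/3}-\phi_1^{-4/3}\phi_2^{-2/3}-\phi_1^{2/3}\phi_2^{-2/3}-\phi_1^{2/3}\phi_2^{4/3}]$; $y_2''-2x^{-1}(1+2x^2)(1-x^2)^{-1}y_2'+\frac12y_1'y_2'+32(1-x^2)^{-2}K^{-1/3}[\phi_1^{2/3}\phi_2^{1/3}-\phi_1^{-1/3}\phi_2^{1/3}-\phi_1^{2/3}\phi_2^{-2/3}+\phi_1^{-4/3}\phi_2^{-2/3}]=0$; $y_3''-2x^{-1}(1+2x^2)(1-x^2)^{-1}y_3'+\frac12y_1'y_3'+32(1-x^2)^{-2}K^{-1/3}[\phi_1^{-1/3}\phi_2^{1/3}-\phi_1^{-1/3}\phi_2^{-2/3}-\phi_1^{2/3}\phi_2^{4/3}+\phi_1^{2/3}\phi_2^{-2/3}]=0$;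 with boundary conditions $\phi_1(0)=\lambda_2/\lambda_1$, $\phi_2(0)=\lambda_3/\lambda_2$, $K(1)=\phi_1(1)=\phi_2(1)=1$, $y_i'(0)=y_i'(1)=0$ for $i=1,2,3$. *)

(* Defs.v *)
From Stdlib Require Import Reals.
From Coquelicot Require Import Coquelicot.
Open Scope R_scope.

Definition smooth (f : R -> R) : Prop := forall (n : nat) (x : R), ex_derive_n f n x.

Section Quantities.
Variables I1 I2 I3 : R -> R.

Definition KK (x : R) : R := I1 x * I2 x * I3 x.
Definition phi1 (x : R) : R := I2 x / I1 x.
Definition phi2 (x : R) : R := I3 x / I2 x.
Definition y1 (x : R) : R := ln (KK x).
Definition y2 (x : R) : R := ln (phi1 x).
Definition y3 (x : R) : R := ln (phi2 x).

Definition Upsilon (x : R) : R :=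
  let p := phi1 x in let q := phi2 x in
  Rpower (KK x) (-1/3) *
  (2 * Rpower (p ^ 2 * q) (1/3) + 2 * Rpower (/ p * q) (1/3)
   + 2 * Rpower (p * q ^ 2) (-1/3)
   - Rpower p (-4/3) * Rpower q (-2/3)
   - Rpower p (2/3) * Rpower q (-2/3)
   - Rpower p (2/3) * Rpower q (4/3)).

Definition eq1 (x : R) : Prop :=
  Derive (Derive y1) x - / x * (1 + 3 * x ^ 2) / (1 - x ^ 2) * Derive y1 x
  + 1/6 * (Derive y1 x) ^ 2
  + 1/3 * ((Derive y2 x) ^ 2 + Derive y2 x * Derive y3 x + (Derive y3 x) ^ 2) = 0.

Definition eq2 (x : R) : Prop :=
  Derive (Derive y1) x - / x * (5 + 7 * x ^ 2) / (1 - x ^ 2) * Derive y1 x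
  + 1/2 * (Derive y1 x) ^ 2
  + 16 / (1 - x ^ 2) ^ 2 * (3 - Upsilon x) = 0.

Definition eq3 (x : R) : Prop :=
  let p := phi1 x in let q := phi2 x in
  Derive (Derive y2) x - 2 * / x * (1 + 2 * x ^ 2) / (1 - x ^ 2) * Derive y2 x
  + 1/2 * Derive y1 x * Derive y2 x
  + 32 / (1 - x ^ 2) ^ 2 * Rpower (KK x) (-1/3) *
    (Rpower p (2/3) * Rpower q (1/3) - Rpower p (-1/3) * Rpower q (1/3)
     - Rpower p (2/3) * Rpower q (-2/3) + Rpower p (-4/3) * Rpower q (-2/3)) = 0.

Definition eq4 (x : R) : Prop :=
  let p := phi1 x in let q := phi2 x in
  Derive (Derive y3) x - 2 * / x * (1 + 2 * x ^ 2) / (1 - x ^ 2) * Derive y3 x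
  + 1/2 * Derive y1 x * Derive y3 x
  + 32 / (1 - x ^ 2) ^ 2 * Rpower (KK x) (-1/3) *
    (Rpower p (-1/3) * Rpower q (1/3) - Rpower p (-1/3) * Rpower q (-2/3)
     - Rpower p (2/3) * Rpower q (4/3) + Rpower p (2/3) * Rpower q (-2/3)) = 0.

End Quantities.

(* Main.v *)
Require Import Defs.
From Stdlib Require Import Reals Lra Psatz.
From Coquelicot Require Import Coquelicot.
Open Scope R_scope.

Lemma Rabs_le_inv a b : Rabs a <= b -> - b <= a <= b.
Proof. unfold Rabs; destruct (Rcase_abs a); intros; lra. Qed.

Lemma cont_of_derive f x l : is_derive f x l -> continuity_pt f x.
Proof.
  intros H. apply is_derive_Reals in H.
  apply derivable_continuous_pt. exact (exist _ l H).
Qed.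

Lemma loc_inc f m d : is_derive f m d -> 0 < d ->
  exists del, 0 < del /\ (forall y, m < y < m + del -> f m < f y)
                      /\ (forall y, m - del < y < m -> f y < f m).
Proof.
  intros H Hd. apply is_derive_Reals in H.
  destruct (H d Hd) as [del Hdel].
  exists del. split; [apply cond_pos|]. split.
  - intros y Hy. specialize (Hdel (y - m) ltac:(lra)).
    rewrite Rabs_right in Hdel by lra. specialize (Hdel ltac:(lra)).
    replace (m + (y - m)) with y in Hdel by ring.
    apply Rabs_def2 in Hdel. destruct Hdel as [_ Hl].
    assert (0 < (f y - f m) / (y - m)) by lra.
    assert (0 < f y - f m).
    { apply (Rmult_lt_reg_r (/ (y - m))). apply Rinv_0_lt_compat; lra.
      rewrite Rmult_0_l. exact H0. }
    lra.
  - intros y Hy. specialize (Hdel (y - m) ltac:(lra)).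
    rewrite Rabs_left in Hdel by lra. specialize (Hdel ltac:(lra)).
    replace (m + (y - m)) with y in Hdel by ring.
    apply Rabs_def2 in Hdel. destruct Hdel as [_ Hl].
    assert (0 < (f y - f m) / (y - m)) by lra.
    assert (0 < (f m - f y) / (m - y)).
    { replace ((f m - f y) / (m - y)) with ((f y - f m) / (y - m)) by (field; lra). exact H0. }
    assert (0 < f m - f y).
    { apply (Rmult_lt_reg_r (/ (m - y))). apply Rinv_0_lt_compat; lra.
      rewrite Rmult_0_l. exact H1. }
    lra.
Qed.

Lemma loc_dec f m d : is_derive f m d -> d < 0 ->
  exists del, 0 < del /\ (forall y, m < y < m + del -> f y < f m)
                      /\ (forall y, m - del < y < m -> f m < f y).
Proof.
  intros H Hd.
  assert (H' : is_derive (fun x => - f x) m (- d)).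
  { apply (is_derive_opp f m d H). }
  destruct (loc_inc _ _ _ H' ltac:(lra)) as [del [P [A B]]].
  exists del; split; [lra|split]; intros y Hy; [specialize (A y Hy)|specialize (B y Hy)]; lra.
Qed.

Lemma deriv_max0 f m d a b : is_derive f m d -> a < m < b ->
  (forall y, a < y < b -> f y <= f m) -> d = 0.
Proof.
  intros H Hm Hmax.
  destruct (Rtotal_order d 0) as [Hl|[He|Hg]]; auto.
  - destruct (loc_dec _ _ _ H Hl) as [del [P [A B]]].
    set (y := m - Rmin del (m - a) / 2).
    assert (Hmin1 : Rmin del (m - a) <= del) by apply Rmin_l.
    assert (Hmin2 : Rmin del (m - a) <= m - a) by apply Rmin_r.
    assert (0 < Rmin del (m - a)) by (apply Rmin_pos; lra).
    specialize (B y ltac:(unfold y; lra)). specialize (Hmax y ltac:(unfold y; lra)). lra.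
  - destruct (loc_inc _ _ _ H Hg) as [del [P [A B]]].
    set (y := m + Rmin del (b - m) / 2).
    assert (Hmin1 : Rmin del (b - m) <= del) by apply Rmin_l.
    assert (Hmin2 : Rmin del (b - m) <= b - m) by apply Rmin_r.
    assert (0 < Rmin del (b - m)) by (apply Rmin_pos; lra).
    specialize (A y ltac:(unfold y; lra)). specialize (Hmax y ltac:(unfold y; lra)). lra.
Qed.

Lemma deriv_min0 f m d a b : is_derive f m d -> a < m < b ->
  (forall y, a < y < b -> f m <= f y) -> d = 0.
Proof.
  intros H Hm Hmin.
  assert (H' : is_derive (fun x => - f x) m (- d)) by apply (is_derive_opp f m d H).
  assert (- d = 0). { apply (deriv_max0 _ m _ a b H' Hm). intros y Hy. specialize (Hmin y Hy). lra. }
  lra.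
Qed.

Lemma mvt_nonneg f g a b : a <= b ->
  (forall x, a <= x <= b -> is_derive f x (g x)) ->
  (forall x, a < x < b -> 0 <= g x) -> f a <= f b.
Proof.
  intros Hab Hd Hg.
  destruct (Req_dec a b) as [E|Hne]. { subst; lra. }
  destruct (MVT_gen f a b (fun x => Rmax (g x) 0)) as [c [Hc Heq]].
  - intros x Hx. rewrite Rmin_left in Hx by lra. rewrite Rmax_right in Hx by lra.
    rewrite Rmax_left by (apply Hg; lra). apply Hd; lra.
  - intros x Hx. rewrite Rmin_left in Hx by lra. rewrite Rmax_right in Hx by lra.
    apply (cont_of_derive _ _ _ (Hd x Hx)).
  - assert (0 <= Rmax (g c) 0) by apply Rmax_r.
    assert (0 <= Rmax (g c) 0 * (b - a)) by (apply Rmult_le_pos; lra). lra.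
Qed.

Lemma mvt_nonpos f g a b : a <= b ->
  (forall x, a <= x <= b -> is_derive f x (g x)) ->
  (forall x, a < x < b -> g x <= 0) -> f b <= f a.
Proof.
  intros Hab Hd Hg.
  assert ((fun x => - f x) a <= (fun x => - f x) b).
  { apply (mvt_nonneg (fun x => - f x) (fun x => - g x)); [exact Hab| |].
    - intros x Hx. apply (is_derive_opp f x (g x) (Hd x Hx)).
    - intros x Hx. specialize (Hg x Hx). lra. }
  simpl in H. lra.
Qed.

Lemma mvt_pos f g a b : a < b ->
  (forall x, a <= x <= b -> is_derive f x (g x)) ->
  (forall x, a <= x <= b -> 0 < g x) -> f a < f b.
Proof.
  intros Hab Hd Hg.
  destruct (MVT_gen f a b g) as [c [Hc Heq]].
  - intros x Hx. rewrite Rmin_left in Hx by lra. rewrite Rmax_right in Hx by lra. apply Hd; lra.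
  - intros x Hx. rewrite Rmin_left in Hx by lra. rewrite Rmax_right in Hx by lra.
    apply (cont_of_derive _ _ _ (Hd x Hx)).
  - rewrite Rmin_left in Hc by lra. rewrite Rmax_right in Hc by lra.
    specialize (Hg c Hc). assert (0 < g c * (b - a)) by (apply Rmult_lt_0_compat; lra). lra.
Qed.

Lemma no_max_pos f g m d del : (forall x, is_derive f x (g x)) -> g m = 0 ->
  is_derive g m d -> 0 < d -> 0 < del -> exists y, m < y < m + del /\ f m < f y.
Proof.
  intros Hf Hg0 Hg Hd Hdel.
  destruct (loc_inc _ _ _ Hg Hd) as [d1 [P [A _]]].
  set (h := Rmin del d1 / 2).
  assert (Hmin1 : Rmin del d1 <= del) by apply Rmin_l.
  assert (Hmin2 : Rmin del d1 <= d1) by apply Rmin_r.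
  assert (0 < Rmin del d1) by (apply Rmin_pos; lra).
  exists (m + h). split; [unfold h; lra|].
  assert (f m <= f (m + h/2)).
  { apply (mvt_nonneg f g); [unfold h; lra| intros; apply Hf|].
    intros x Hx. specialize (A x ltac:(unfold h in *; lra)). lra. }
  assert (f (m + h/2) < f (m + h)).
  { apply (mvt_pos f g); [unfold h; lra| intros; apply Hf|].
    intros x Hx. specialize (A x ltac:(unfold h in *; lra)). lra. }
  lra.
Qed.

Lemma no_min_neg f g m d del : (forall x, is_derive f x (g x)) -> g m = 0 ->
  is_derive g m d -> d < 0 -> 0 < del -> exists y, m < y < m + del /\ f y < f m.
Proof.
  intros Hf Hg0 Hg Hd Hdel.
  destruct (no_max_pos (fun x => - f x) (fun x => - g x) m (- d) del) as [y [Hy Hlt]].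
  - intros x. apply (is_derive_opp f x (g x) (Hf x)).
  - lra.
  - apply (is_derive_opp g m d Hg).
  - lra.
  - lra.
  - exists y. split; auto. lra.
Qed.

Lemma bnd f a b : a <= b -> (forall x, a <= x <= b -> ex_derive f x) ->
  exists M, forall x, a <= x <= b -> Rabs (f x) <= M.
Proof.
  intros Hab Hd.
  assert (Hc : forall c, a <= c <= b -> continuity_pt f c).
  { intros c Hc. destruct (Hd c Hc) as [l Hl]. exact (cont_of_derive _ _ _ Hl). }
  destruct (continuity_ab_maj f a b Hab Hc) as [M1 [HM1 _]].
  destruct (continuity_ab_min f a b Hab Hc) as [M2 [HM2 _]].
  exists (Rmax (f M1) (- f M2)). intros x Hx.
  specialize (HM1 x Hx). specialize (HM2 x Hx).
  unfold Rabs; destruct (Rcase_abs (f x)).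
  - apply Rle_trans with (- f M2); [lra|apply Rmax_r].
  - apply Rle_trans with (f M1); [lra|apply Rmax_l].
Qed.

(* backward uniqueness (Gronwall) *)
Lemma U2 (f g g' al ga : R -> R) a b Ma Mg : a <= b ->
  (forall x, a <= x <= b -> is_derive f x (g x) /\ is_derive g x (g' x) /\
      g' x = al x * g x + ga x /\ Rabs (al x) <= Ma /\ Rabs (ga x) <= Mg * Rabs (f x)) ->
  f b = 0 -> g b = 0 -> forall x, a <= x <= b -> f x = 0 /\ g x = 0.
Proof.
  intros Hab H Hfb Hgb x Hx.
  assert (HMa : 0 <= Ma) by (destruct (H a ltac:(lra)) as [_ [_ [_ [A _]]]]; pose proof (Rabs_pos (al a)); lra).
  assert (HMg : 0 <= Rabs Mg) by apply Rabs_pos.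
  set (L := 1 + 2 * Ma + Rabs Mg).
  set (E := fun y => (f y ^ 2 + g y ^ 2) * exp (L * y)).
  assert (HE : E x <= E b).
  { apply (mvt_nonneg E (fun y => (2 * f y * g y + 2 * g y * g' y + L * (f y ^ 2 + g y ^ 2)) * exp (L * y))).
    - lra.
    - intros z Hz. destruct (H z ltac:(lra)) as [Hf [Hg _]]. unfold E.
      clear E. clearbody L. auto_derive.
      + repeat split; try (eexists; eassumption).
      + replace (Derive (fun x0 => f x0) z) with (g z) by (symmetry; apply is_derive_unique; exact Hf).
        replace (Derive (fun x0 => g x0) z) with (g' z) by (symmetry; apply is_derive_unique; exact Hg).
        ring.
    - intros y Hy. destruct (H y ltac:(lra)) as [_ [_ [Heq [Hal Hga]]]].
      apply Rmult_le_pos; [|left; apply exp_pos].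
      rewrite Heq.
      assert (Hga' : Rabs (ga y) <= Rabs Mg * Rabs (f y)).
      { apply Rle_trans with (1 := Hga). apply Rmult_le_compat_r; [apply Rabs_pos|apply Rle_abs]. }
      clear Hga. rename Hga' into Hga.
      assert (A1 : - (Ma * g y ^ 2) <= al y * g y ^ 2).
      { assert (Rabs (al y * g y ^ 2) <= Ma * g y ^ 2).
        { rewrite Rabs_mult. rewrite (Rabs_right (g y ^ 2)) by (apply Rle_ge; apply pow2_ge_0).
          apply Rmult_le_compat_r; [apply pow2_ge_0|auto]. }
        apply Rabs_le_inv in H0. lra. }
      assert (A2 : - (Rabs Mg * Rabs (f y) * Rabs (g y)) <= g y * ga y).
      { assert (Rabs (g y * ga y) <= Rabs Mg * Rabs (f y) * Rabs (g y)).
        { rewrite Rabs_mult. rewrite (Rmult_comm (Rabs (g y))).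
          apply Rmult_le_compat_r; [apply Rabs_pos|auto]. }
        apply Rabs_le_inv in H0. lra. }
      assert (A3 : 2 * (Rabs (f y) * Rabs (g y)) <= f y ^ 2 + g y ^ 2).
      { pose proof (pow2_ge_0 (Rabs (f y) - Rabs (g y))).
        rewrite <- (pow2_abs (f y)), <- (pow2_abs (g y)). nra. }
      assert (A4 : - (f y ^ 2 + g y ^ 2) <= 2 * f y * g y) by (pose proof (pow2_ge_0 (f y + g y)); nra).
      assert (A5 : 0 <= Rabs Mg * (f y ^ 2 + g y ^ 2 - 2 * (Rabs (f y) * Rabs (g y)))) by (apply Rmult_le_pos; lra).
      assert (A6 : 0 <= Ma * f y ^ 2) by (apply Rmult_le_pos; [lra|apply pow2_ge_0]).
      unfold L. nra. }
  unfold E in HE. rewrite Hfb, Hgb in HE.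
  assert (0 < exp (L * x)) by apply exp_pos.
  assert (f x ^ 2 + g x ^ 2 <= 0) by nra.
  pose proof (pow2_ge_0 (f x)). pose proof (pow2_ge_0 (g x)).
  split; apply (Rsqr_0_uniq); unfold Rsqr; nra.
Qed.


Lemma open_of x a b : a <= x <= b -> x <> a -> x <> b -> a < x < b.
Proof.
  intros [H1 H2] Na Nb. split.
  - destruct (Rle_lt_or_eq_dec _ _ H1); auto. congruence.
  - destruct (Rle_lt_or_eq_dec _ _ H2); auto. congruence.
Qed.

Section Channel.
Variables f g g' al be H : R -> R.
Hypothesis Hf : forall x, is_derive f x (g x).
Hypothesis Hg : forall x, is_derive g x (g' x).
Hypothesis Heq : forall x, 0 < x < 1 -> g' x = al x * g x - be x * H x.
Hypothesis Hbe : forall x, 0 < x < 1 -> 0 < be x.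

Lemma core_max m : 0 < m < 1 -> (forall x, 0 <= x <= 1 -> f x <= f m) -> 0 <= H m.
Proof.
  intros Hm Hmax. destruct (Rle_lt_dec 0 (H m)) as [|Hn]; auto. exfalso.
  assert (Hg0 : g m = 0) by (apply (deriv_max0 f m (g m) 0 1 (Hf m) Hm); intros; apply Hmax; lra).
  assert (Hd : 0 < g' m).
  { rewrite Heq by auto. rewrite Hg0. specialize (Hbe m Hm). nra. }
  destruct (no_max_pos f g m (g' m) (1 - m) Hf Hg0 (Hg m) Hd ltac:(lra)) as [y [Hy Hlt]].
  specialize (Hmax y ltac:(lra)). lra.
Qed.

Lemma core_min a m : 0 <= a -> a < m < 1 -> (forall x, a <= x <= 1 -> f m <= f x) -> H m <= 0.
Proof.
  intros Ha Hm Hmin. destruct (Rle_lt_dec (H m) 0) as [|Hn]; auto. exfalso.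
  assert (Hg0 : g m = 0) by (apply (deriv_min0 f m (g m) a 1 (Hf m) Hm); intros; apply Hmin; lra).
  assert (Hd : g' m < 0).
  { rewrite Heq by lra. rewrite Hg0. specialize (Hbe m ltac:(lra)). nra. }
  destruct (no_min_neg f g m (g' m) (1 - m) Hf Hg0 (Hg m) Hd ltac:(lra)) as [y [Hy Hlt]].
  specialize (Hmin y ltac:(lra)). lra.
Qed.

Lemma fcont x : continuity_pt f x.
Proof. exact (cont_of_derive _ _ _ (Hf x)). Qed.

Lemma ch_upper : f 0 <= 0 -> f 1 <= 0 -> (forall x, 0 < x < 1 -> 0 < f x -> H x < 0) ->
  forall x, 0 <= x <= 1 -> f x <= 0.
Proof.
  intros H0 H1 HH.
  destruct (continuity_ab_maj f 0 1 ltac:(lra) (fun c _ => fcont c)) as [m [Hmax Hm]].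
  intros x Hx. destruct (Rle_lt_dec (f m) 0) as [Hle|Hgt].
  - specialize (Hmax x Hx). lra.
  - exfalso. assert (Hm' : 0 < m < 1).
    { apply open_of; auto; intro E; subst; lra. }
    specialize (HH m Hm' Hgt). specialize (core_max m Hm' Hmax). lra.
Qed.

Lemma ch_gnonneg : (forall x, 0 <= x <= 1 -> f x <= 0) -> f 1 = 0 ->
  (forall x, 0 < x < 1 -> f x < 0 -> 0 < H x) -> forall x, 0 < x < 1 -> 0 <= g x.
Proof.
  intros Hle H1 HH x1 Hx1. destruct (Rle_lt_dec 0 (g x1)) as [|Hn]; auto. exfalso.
  destruct (loc_dec f x1 (g x1) (Hf x1) Hn) as [del [Pd [A _]]].
  set (y0 := x1 + Rmin del (1 - x1) / 2).
  assert (Hmin1 : Rmin del (1 - x1) <= del) by apply Rmin_l.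
  assert (Hmin2 : Rmin del (1 - x1) <= 1 - x1) by apply Rmin_r.
  assert (0 < Rmin del (1 - x1)) by (apply Rmin_pos; lra).
  specialize (A y0 ltac:(unfold y0; lra)).
  destruct (continuity_ab_min f x1 1 ltac:(lra) (fun c _ => fcont c)) as [m [Hmin Hm]].
  specialize (Hmin y0 ltac:(unfold y0; lra)) as Hmy.
  assert (f x1 <= 0) by (apply Hle; lra).
  assert (Hm' : x1 < m < 1).
  { apply open_of; auto; intro E; subst; lra. }
  assert (0 < H m) by (apply HH; lra).
  assert (H m <= 0) by (apply (core_min x1 m); [lra|lra|exact Hmin]).
  lra.
Qed.

Lemma ch_gpos : (forall x, 0 <= x <= 1 -> f x <= 0) -> (forall x, 0 < x < 1 -> 0 <= g x) ->
  f 0 < 0 -> (forall x, 0 < x < 1 -> f x < 0 -> 0 < H x) ->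
  (forall x0, 0 < x0 < 1 -> f x0 = 0 -> g x0 = 0 -> forall e, 0 < e <= x0 -> f e = 0) ->
  forall x, 0 < x < 1 -> 0 < g x.
Proof.
  intros Hle Hge H0 HH Hu x0 Hx0. destruct (Rle_lt_dec (g x0) 0) as [Hn|]; auto. exfalso.
  assert (Hg0 : g x0 = 0) by (specialize (Hge x0 Hx0); lra).
  destruct (Rle_lt_dec 0 (f x0)) as [Hf0|Hf0].
  - assert (f x0 = 0) by (specialize (Hle x0 ltac:(lra)); lra).
    specialize (Hu x0 Hx0 H1 Hg0).
    pose proof (fcont 0) as Hc.
    unfold continuity_pt, continue_in, limit1_in, limit_in in Hc. simpl in Hc. unfold R_dist in Hc.
    destruct (Hc (- f 0) ltac:(lra)) as [alp [Halp Hc']].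
    set (e := Rmin alp x0 / 2).
    assert (Hmin1 : Rmin alp x0 <= alp) by apply Rmin_l.
    assert (Hmin2 : Rmin alp x0 <= x0) by apply Rmin_r.
    assert (0 < Rmin alp x0) by (apply Rmin_pos; lra).
    specialize (Hc' e). specialize (Hu e ltac:(unfold e; lra)).
    rewrite Hu in Hc'.
    assert (Rabs (0 - f 0) < - f 0).
    { apply Hc'. split; [unfold D_x, no_cond; split; auto; unfold e; lra|].
      rewrite Rminus_0_r, Rabs_right by (unfold e; lra). unfold e; lra. }
    rewrite Rabs_right in H3 by lra. lra.
  - assert (HHp : 0 < H x0) by (apply HH; lra).
    assert (g' x0 = 0).
    { apply (deriv_min0 g x0 (g' x0) 0 1 (Hg x0) Hx0). intros y Hy. rewrite Hg0. apply Hge; lra. }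
    rewrite Heq in H1 by auto. rewrite Hg0 in H1. specialize (Hbe x0 Hx0). nra.
Qed.

End Channel.

Lemma uniq_channel (f g g' al be H ka : R -> R) a b :
  0 < a -> a <= b -> b < 1 ->
  (forall x, is_derive f x (g x)) -> (forall x, is_derive g x (g' x)) ->
  (forall x, a <= x <= b -> g' x = al x * g x - be x * H x) ->
  (forall x, a <= x <= b -> 0 < be x) ->
  (forall x, a <= x <= b -> ex_derive al x) ->
  (forall x, a <= x <= b -> ex_derive be x) ->
  (forall x, a <= x <= b -> ex_derive ka x) ->
  (forall x, a <= x <= b -> Rabs (H x) <= ka x * Rabs (f x)) ->
  f b = 0 -> g b = 0 -> forall x, a <= x <= b -> f x = 0 /\ g x = 0.
Proof.
  intros Ha Hab Hb Hf Hg Heq Hbe Hal Hbe' Hka HH Hfb Hgb.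
  destruct (bnd al a b Hab Hal) as [Ma HMa].
  destruct (bnd (fun x => be x * ka x) a b Hab) as [Mg HMg].
  { intros x Hx. apply ex_derive_mult; auto. }
  apply (U2 f g g' al (fun x => - (be x * H x)) a b Ma Mg Hab); auto.
  intros x Hx. refine (conj (Hf x) (conj (Hg x) (conj _ (conj (HMa x Hx) _)))).
  - rewrite Heq by auto. ring.
  - rewrite Rabs_Ropp, Rabs_mult. specialize (Hbe x Hx). rewrite (Rabs_right (be x)) by lra.
    apply Rle_trans with (be x * (ka x * Rabs (f x))).
    + apply Rmult_le_compat_l; [lra|auto].
    + rewrite <- Rmult_assoc. apply Rmult_le_compat_r; [apply Rabs_pos|].
      apply Rle_trans with (2 := HMg x Hx). apply Rle_abs.
Qed.


Definition C2 (f : R -> R) := (forall x, ex_derive f x) /\ (forall x, ex_derive (Derive f) x).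

Lemma smooth_C2 J : smooth J -> C2 J.
Proof. intros H. split; intros x; [exact (H 1%nat x)| exact (H 2%nat x)]. Qed.

Lemma C2_ext f g : (forall x, f x = g x) -> C2 f -> C2 g.
Proof.
  intros E [H1 H2]. split; intros x.
  - apply (ex_derive_ext f g x E (H1 x)).
  - apply (ex_derive_ext (Derive f) (Derive g) x); [|apply H2].
    intros y. apply Derive_ext. exact E.
Qed.

Lemma C2_plus f g : C2 f -> C2 g -> C2 (fun x => f x + g x).
Proof.
  intros [F1 F2] [G1 G2]. split; intros x.
  - auto_derive; auto.
  - apply (ex_derive_ext (fun y => Derive f y + Derive g y)).
    + intros y. symmetry. apply Derive_plus; auto.
    + auto_derive; auto.
Qed.

Lemma C2_opp f : C2 f -> C2 (fun x => - f x).
Proof.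
  intros [F1 F2]. split; intros x.
  - auto_derive; auto.
  - apply (ex_derive_ext (fun y => - Derive f y)).
    + intros y. symmetry. apply Derive_opp.
    + auto_derive; auto.
Qed.

Lemma C2_ln J : C2 J -> (forall x, 0 < J x) -> C2 (fun x => ln (J x)).
Proof.
  intros [F1 F2] Hp. split; intros x.
  - auto_derive. split; auto.
  - apply (ex_derive_ext (fun y => Derive J y * / J y)).
    + intros y. symmetry. apply is_derive_unique. auto_derive.
      * split; auto.
      * rewrite Rmult_1_l; reflexivity.
    + auto_derive. split; [apply F2|]. split; [apply F1|]. split; [apply Rgt_not_eq, Hp|exact Logic.I].
Qed.

Section D.
Variables I1 I2 I3 : R -> R.
Hypotheses (HS1 : smooth I1) (HS2 : smooth I2) (HS3 : smooth I3).
Hypotheses (P1 : forall x, 0 < I1 x) (P2 : forall x, 0 < I2 x) (P3 : forall x, 0 < I3 x).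

Lemma C2_y1 : C2 (y1 I1 I2 I3).
Proof.
  apply (C2_ext (fun x => (ln (I1 x) + ln (I2 x)) + ln (I3 x))).
  - intros x. unfold y1, KK. rewrite !ln_mult; auto.
    apply Rmult_lt_0_compat; auto. all: auto.
  - apply C2_plus; [apply C2_plus|]; apply C2_ln; try apply smooth_C2; assumption.
Qed.

Lemma C2_y2 : C2 (y2 I1 I2).
Proof.
  apply (C2_ext (fun x => ln (I2 x) + - ln (I1 x))).
  - intros x. unfold y2, phi1. rewrite ln_div; auto.
  - apply C2_plus; [|apply C2_opp]; apply C2_ln; try apply smooth_C2; assumption.
Qed.

Lemma C2_y3 : C2 (y3 I2 I3).
Proof.
  apply (C2_ext (fun x => ln (I3 x) + - ln (I2 x))).
  - intros x. unfold y3, phi2. rewrite ln_div; auto.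
  - apply C2_plus; [|apply C2_opp]; apply C2_ln; try apply smooth_C2; assumption.
Qed.
End D.


Definition Fe s t := exp (2/3 * s) * exp (1/3 * t) - exp (-1/3 * s) * exp (1/3 * t)
  - exp (2/3 * s) * exp (-2/3 * t) + exp (-4/3 * s) * exp (-2/3 * t).
Definition Ge s t := exp (-1/3 * s) * exp (1/3 * t) - exp (-1/3 * s) * exp (-2/3 * t)
  - exp (2/3 * s) * exp (4/3 * t) + exp (2/3 * s) * exp (-2/3 * t).

Lemma expn a (n : nat) : exp (INR n * a) = exp a ^ n.
Proof.
  induction n as [|n IH].
  - simpl. rewrite Rmult_0_l. apply exp_0.
  - rewrite S_INR. replace ((INR n + 1) * a) with (INR n * a + a) by ring.
    rewrite exp_plus, IH. simpl. ring.
Qed.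

Lemma expp a c (n : nat) : c = INR n / 3 -> exp (c * a) = exp (a / 3) ^ n.
Proof. intros ->. rewrite <- expn. f_equal. field. Qed.
Lemma expm a c (n : nat) : c = - (INR n / 3) -> exp (c * a) = / exp (a / 3) ^ n.
Proof. intros ->. rewrite <- expn, <- exp_Ropp. f_equal. field. Qed.

Ltac exp_norm s t :=
  repeat first
  [ rewrite (expp s (2/3) 2) by (simpl; field)
  | rewrite (expp s (1/3) 1) by (simpl; field)
  | rewrite (expm s (-1/3) 1) by (simpl; field)
  | rewrite (expm s (-4/3) 4) by (simpl; field)
  | rewrite (expp t (1/3) 1) by (simpl; field)
  | rewrite (expm t (-2/3) 2) by (simpl; field)
  | rewrite (expp t (4/3) 4) by (simpl; field)
  | rewrite (expm t (-1/3) 1) by (simpl; field) ].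

Lemma exp3 a : exp a = exp (a / 3) ^ 3.
Proof. rewrite <- expn. f_equal. simpl. field. Qed.

Lemma Fe_fact s t : Fe s t = exp (-4/3 * s) * exp (-2/3 * t) * (1 - exp s) * (1 + exp s - exp s * exp t).
Proof.
  unfold Fe. rewrite (exp3 s), (exp3 t). exp_norm s t.
  assert (exp (s/3) <> 0) by (apply Rgt_not_eq, exp_pos).
  assert (exp (t/3) <> 0) by (apply Rgt_not_eq, exp_pos).
  field; auto.
Qed.

Lemma Ge_fact s t : Ge s t = exp (-1/3 * s) * exp (-2/3 * t) * (exp t - 1) * (1 - exp s - exp s * exp t).
Proof.
  unfold Ge. rewrite (exp3 s), (exp3 t). exp_norm s t.
  assert (exp (s/3) <> 0) by (apply Rgt_not_eq, exp_pos).
  assert (exp (t/3) <> 0) by (apply Rgt_not_eq, exp_pos).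
  field; auto.
Qed.

Lemma FG_fact s t : Fe s t + Ge s t = exp (-4/3 * s) * exp (-2/3 * t) * (1 - exp s * exp t) * (1 + exp s * exp t - exp s).
Proof.
  unfold Fe, Ge. rewrite (exp3 s), (exp3 t). exp_norm s t.
  assert (exp (s/3) <> 0) by (apply Rgt_not_eq, exp_pos).
  assert (exp (t/3) <> 0) by (apply Rgt_not_eq, exp_pos).
  field; auto.
Qed.

Lemma exp_lt1 a : a < 0 -> exp a < 1.
Proof. intros. rewrite <- exp_0. apply exp_increasing; auto. Qed.
Lemma exp_gt1 a : 0 < a -> 1 < exp a.
Proof. intros. rewrite <- exp_0. apply exp_increasing; auto. Qed.
Lemma exp_le1 a : a <= 0 -> exp a <= 1.
Proof. intros [H|H]; [left; apply exp_lt1; auto| subst; rewrite exp_0; lra]. Qed.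
Lemma exp_le a b : a <= b -> exp a <= exp b.
Proof. intros [H|H]; [left; apply exp_increasing; auto| subst; lra]. Qed.

Lemma pos3 a b c : 0 < a -> 0 < b -> 0 < c -> 0 < a * b * c.
Proof. intros; repeat apply Rmult_lt_0_compat; auto. Qed.

Lemma Fe_pos s t : s < 0 -> s + t <= 0 -> 0 < Fe s t.
Proof.
  intros H1 H2. rewrite Fe_fact. rewrite <- (exp_plus s t).
  pose proof (exp_lt1 s H1). pose proof (exp_le1 _ H2). pose proof (exp_pos s).
  apply pos3; [apply Rmult_lt_0_compat; apply exp_pos|lra|lra].
Qed.

Lemma Fe_neg s t : 0 < s -> s + t <= s -> Fe s t < 0.
Proof.
  intros H1 H2. rewrite Fe_fact. rewrite <- (exp_plus s t).
  pose proof (exp_gt1 s H1). pose proof (exp_le _ _ H2).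
  assert (0 < exp (-4/3 * s) * exp (-2/3 * t)) by (apply Rmult_lt_0_compat; apply exp_pos).
  assert (0 < exp (-4/3 * s) * exp (-2/3 * t) * (exp s - 1) * (1 + exp s - exp (s + t))) by (apply pos3; lra).
  nra.
Qed.

Lemma FG_pos s t : s + t < 0 -> s <= 0 -> 0 < Fe s t + Ge s t.
Proof.
  intros H1 H2. rewrite FG_fact. rewrite <- (exp_plus s t).
  pose proof (exp_lt1 _ H1). pose proof (exp_le1 _ H2). pose proof (exp_pos (s + t)).
  apply pos3; [apply Rmult_lt_0_compat; apply exp_pos|lra|lra].
Qed.

Lemma FG_neg s t : 0 < s + t -> s <= s + t -> Fe s t + Ge s t < 0.
Proof.
  intros H1 H2. rewrite FG_fact. rewrite <- (exp_plus s t).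
  pose proof (exp_gt1 _ H1). pose proof (exp_le _ _ H2).
  assert (0 < exp (-4/3 * s) * exp (-2/3 * t)) by (apply Rmult_lt_0_compat; apply exp_pos).
  assert (0 < exp (-4/3 * s) * exp (-2/3 * t) * (exp (s + t) - 1) * (1 + exp (s + t) - exp s)) by (apply pos3; lra).
  nra.
Qed.

Lemma Ge_pos s t : t < 0 -> 1 < exp s + exp s * exp t -> 0 < Ge s t.
Proof.
  intros H1 H2. rewrite Ge_fact.
  pose proof (exp_lt1 _ H1).
  assert (0 < exp (-1/3 * s) * exp (-2/3 * t)) by (apply Rmult_lt_0_compat; apply exp_pos).
  assert (0 < exp (-1/3 * s) * exp (-2/3 * t) * (1 - exp t) * (exp s + exp s * exp t - 1)) by (apply pos3; lra).
  nra.
Qed.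

Lemma Ge_neg s t : 0 < t -> 1 < exp s + exp s * exp t -> Ge s t < 0.
Proof.
  intros H1 H2. rewrite Ge_fact.
  pose proof (exp_gt1 _ H1).
  assert (0 < exp (-1/3 * s) * exp (-2/3 * t)) by (apply Rmult_lt_0_compat; apply exp_pos).
  assert (0 < exp (-1/3 * s) * exp (-2/3 * t) * (exp t - 1) * (exp s + exp s * exp t - 1)) by (apply pos3; lra).
  nra.
Qed.

Lemma exp_diff a b : Rabs (exp a - exp b) <= (exp a + exp b) * Rabs (a - b).
Proof.
  assert (K : forall a b, a <= b -> exp b - exp a <= exp b * (b - a)).
  { intros x y Hxy. pose proof (exp_ineq1_le (x - y)).
    replace (exp x) with (exp y * exp (x - y)) by (rewrite <- exp_plus; f_equal; ring).
    pose proof (exp_pos y). nra. }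
  pose proof (exp_pos a). pose proof (exp_pos b).
  destruct (Rle_dec a b) as [Hab|Hab].
  - specialize (K a b Hab). pose proof (exp_le _ _ Hab).
    rewrite Rabs_left1 by lra. rewrite Rabs_left1 by lra. nra.
  - assert (Hba : b <= a) by lra. specialize (K b a Hba). pose proof (exp_le _ _ Hba).
    rewrite Rabs_right by lra. rewrite Rabs_right by lra. nra.
Qed.

Definition kF s t := (exp (2/3 * s + 1/3 * t) + exp (-1/3 * s + 1/3 * t))
  + 2 * (exp (-4/3 * s + -2/3 * t) + exp (2/3 * s + -2/3 * t)).
Definition kG s t := (exp (-1/3 * s + 1/3 * t) + exp (-1/3 * s + -2/3 * t))
  + 2 * (exp (2/3 * s + -2/3 * t) + exp (2/3 * s + 4/3 * t)).
Definition kR s t := (exp (2/3 * s + 1/3 * t) + exp (-1/3 * s + -2/3 * t))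
  + 2 * (exp (-4/3 * s + -2/3 * t) + exp (2/3 * s + 4/3 * t)).

Lemma tri4 a b c d : Rabs (a - b + (c - d)) <= Rabs (a - b) + Rabs (c - d).
Proof. apply Rabs_triang. Qed.

Lemma Fe_bnd s t : Rabs (Fe s t) <= kF s t * Rabs s.
Proof.
  unfold Fe, kF. rewrite <- !exp_plus.
  replace (exp (2 / 3 * s + 1 / 3 * t) - exp (-1 / 3 * s + 1 / 3 * t) - exp (2 / 3 * s + -2 / 3 * t) +
     exp (-4 / 3 * s + -2 / 3 * t)) with
    ((exp (2 / 3 * s + 1 / 3 * t) - exp (-1 / 3 * s + 1 / 3 * t)) + (exp (-4 / 3 * s + -2 / 3 * t) - exp (2 / 3 * s + -2 / 3 * t))) by ring.
  eapply Rle_trans; [apply Rabs_triang|].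
  pose proof (exp_diff (2 / 3 * s + 1 / 3 * t) (-1 / 3 * s + 1 / 3 * t)).
  pose proof (exp_diff (-4 / 3 * s + -2 / 3 * t) (2 / 3 * s + -2 / 3 * t)).
  replace (2 / 3 * s + 1 / 3 * t - (-1 / 3 * s + 1 / 3 * t)) with s in H by field.
  replace (-4 / 3 * s + -2 / 3 * t - (2 / 3 * s + -2 / 3 * t)) with (- (2 * s)) in H0 by field.
  rewrite Rabs_Ropp, Rabs_mult, (Rabs_right 2) in H0 by lra.
  lra.
Qed.

Lemma Ge_bnd s t : Rabs (Ge s t) <= kG s t * Rabs t.
Proof.
  unfold Ge, kG. rewrite <- !exp_plus.
  match goal with |- Rabs ?e <= _ => replace e with
    ((exp (-1/3 * s + 1/3 * t) - exp (-1/3 * s + -2/3 * t)) + (exp (2/3 * s + -2/3 * t) - exp (2/3 * s + 4/3 * t))) by ring end.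
  eapply Rle_trans; [apply Rabs_triang|].
  pose proof (exp_diff (-1/3 * s + 1/3 * t) (-1/3 * s + -2/3 * t)).
  pose proof (exp_diff (2/3 * s + -2/3 * t) (2/3 * s + 4/3 * t)).
  replace (-1/3 * s + 1/3 * t - (-1/3 * s + -2/3 * t)) with t in H by field.
  replace (2/3 * s + -2/3 * t - (2/3 * s + 4/3 * t)) with (- (2 * t)) in H0 by field.
  rewrite Rabs_Ropp, Rabs_mult, (Rabs_right 2) in H0 by lra.
  lra.
Qed.

Lemma FG_bnd s t : Rabs (Fe s t + Ge s t) <= kR s t * Rabs (s + t).
Proof.
  unfold Fe, Ge, kR. rewrite <- !exp_plus.
  match goal with |- Rabs ?e <= _ => replace e with
    ((exp (2/3 * s + 1/3 * t) - exp (-1/3 * s + -2/3 * t)) + (exp (-4/3 * s + -2/3 * t) - exp (2/3 * s + 4/3 * t))) by ring end.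
  eapply Rle_trans; [apply Rabs_triang|].
  pose proof (exp_diff (2/3 * s + 1/3 * t) (-1/3 * s + -2/3 * t)).
  pose proof (exp_diff (-4/3 * s + -2/3 * t) (2/3 * s + 4/3 * t)).
  replace (2/3 * s + 1/3 * t - (-1/3 * s + -2/3 * t)) with (s + t) in H by field.
  replace (-4/3 * s + -2/3 * t - (2/3 * s + 4/3 * t)) with (- (2 * (s + t))) in H0 by field.
  rewrite Rabs_Ropp, Rabs_mult, (Rabs_right 2) in H0 by lra.
  lra.
Qed.


Ltac side := repeat match goal with
 | |- _ /\ _ => split
 | |- True => exact Logic.I
 end.

Section M.
Variables I1 I2 I3 : R -> R.
Hypotheses (HS1 : smooth I1) (HS2 : smooth I2) (HS3 : smooth I3).
Hypotheses (P1 : forall x, 0 < I1 x) (P2 : forall x, 0 < I2 x) (P3 : forall x, 0 < I3 x).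
Hypothesis HODE : forall x, 0 < x < 1 ->
     eq1 I1 I2 I3 x /\ eq2 I1 I2 I3 x /\ eq3 I1 I2 I3 x /\ eq4 I1 I2 I3 x.

Local Notation k := (y1 I1 I2 I3).
Local Notation s := (y2 I1 I2).
Local Notation t := (y3 I2 I3).

Lemma exk x : ex_derive k x. Proof. apply (proj1 (C2_y1 _ _ _ HS1 HS2 HS3 P1 P2 P3)). Qed.
Lemma exdk x : ex_derive (Derive k) x. Proof. apply (proj2 (C2_y1 _ _ _ HS1 HS2 HS3 P1 P2 P3)). Qed.
Lemma exs x : ex_derive s x. Proof. apply (proj1 (C2_y2 _ _ HS1 HS2 P1 P2)). Qed.
Lemma exds x : ex_derive (Derive s) x. Proof. apply (proj2 (C2_y2 _ _ HS1 HS2 P1 P2)). Qed.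
Lemma ext x : ex_derive t x. Proof. apply (proj1 (C2_y3 _ _ HS2 HS3 P2 P3)). Qed.
Lemma exdt x : ex_derive (Derive t) x. Proof. apply (proj2 (C2_y3 _ _ HS2 HS3 P2 P3)). Qed.

Lemma dk x : is_derive k x (Derive k x). Proof. apply Derive_correct, exk. Qed.
Lemma ddk x : is_derive (Derive k) x (Derive (Derive k) x). Proof. apply Derive_correct, exdk. Qed.
Lemma ds x : is_derive s x (Derive s x). Proof. apply Derive_correct, exs. Qed.
Lemma dds x : is_derive (Derive s) x (Derive (Derive s) x). Proof. apply Derive_correct, exds. Qed.
Lemma dt x : is_derive t x (Derive t x). Proof. apply Derive_correct, ext. Qed.
Lemma ddt x : is_derive (Derive t) x (Derive (Derive t) x). Proof. apply Derive_correct, exdt. Qed.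

Definition al x := 2 * / x * (1 + 2 * x ^ 2) / (1 - x ^ 2) - 1/2 * Derive k x.
Definition be x := 32 / (1 - x ^ 2) ^ 2 * exp (-1/3 * k x).
Definition Q x := Derive s x ^ 2 + Derive s x * Derive t x + Derive t x ^ 2.

Lemma eq3f x : 0 < x < 1 -> Derive (Derive s) x = al x * Derive s x - be x * Fe (s x) (t x).
Proof.
  intros Hx. destruct (HODE x Hx) as [_ [_ [H _]]]. unfold eq3, Rpower in H. cbv zeta in H.
  change (ln (phi1 I1 I2 x)) with (s x) in H. change (ln (phi2 I2 I3 x)) with (t x) in H.
  change (ln (KK I1 I2 I3 x)) with (k x) in H.
  unfold al, be, Fe. lra.
Qed.

Lemma eq4f x : 0 < x < 1 -> Derive (Derive t) x = al x * Derive t x - be x * Ge (s x) (t x).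
Proof.
  intros Hx. destruct (HODE x Hx) as [_ [_ [_ H]]]. unfold eq4, Rpower in H. cbv zeta in H.
  change (ln (phi1 I1 I2 x)) with (s x) in H. change (ln (phi2 I2 I3 x)) with (t x) in H.
  change (ln (KK I1 I2 I3 x)) with (k x) in H.
  unfold al, be, Ge. lra.
Qed.

Lemma eq1f x : 0 < x < 1 -> Derive (Derive k) x =
  / x * (1 + 3 * x ^ 2) / (1 - x ^ 2) * Derive k x - 1/6 * Derive k x ^ 2 - 1/3 * Q x.
Proof.
  intros Hx. destruct (HODE x Hx) as [H _]. unfold eq1 in H. unfold Q. lra.
Qed.

Lemma be_pos x : 0 < x < 1 -> 0 < be x.
Proof.
  intros Hx. unfold be. apply Rmult_lt_0_compat; [|apply exp_pos].
  assert (0 < (1 - x^2)^2) by (apply pow_lt; nra).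
  apply Rdiv_lt_0_compat; lra.
Qed.

Lemma ex_al x : 0 < x < 1 -> ex_derive al x.
Proof.
  intros Hx. unfold al. auto_derive. side; try apply exdk; nra.
Qed.

Lemma ex_be x : 0 < x < 1 -> ex_derive be x.
Proof.
  intros Hx. unfold be. auto_derive. side; try apply exk.
  assert (0 < (1 - x^2)) by nra. simpl. nra.
Qed.


Lemma uniq_gen2 (f g g' H ka : R -> R) : (forall x, is_derive f x (g x)) -> (forall x, is_derive g x (g' x)) ->
  (forall x, 0 < x < 1 -> g' x = al x * g x - be x * H x) -> (forall x, ex_derive ka x) ->
  (forall x, Rabs (H x) <= ka x * Rabs (f x)) ->
  forall x0, 0 < x0 < 1 -> f x0 = 0 -> g x0 = 0 -> forall e, 0 < e <= x0 -> f e = 0 /\ g e = 0.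
Proof.
  intros Hf Hg Heq Hka HH x0 Hx0 F0 G0 e He.
  refine (uniq_channel f g g' al be H ka e x0 ltac:(lra) ltac:(lra) ltac:(lra) Hf Hg _ _ _ _ _ _ F0 G0 e ltac:(lra)).
  - intros; apply Heq; lra.
  - intros; apply be_pos; lra.
  - intros; apply ex_al; lra.
  - intros; apply ex_be; lra.
  - intros; apply Hka.
  - intros; apply HH.
Qed.

Lemma uniq_gen (f g g' H ka : R -> R) : (forall x, is_derive f x (g x)) -> (forall x, is_derive g x (g' x)) ->
  (forall x, 0 < x < 1 -> g' x = al x * g x - be x * H x) -> (forall x, ex_derive ka x) ->
  (forall x, Rabs (H x) <= ka x * Rabs (f x)) ->
  forall x0, 0 < x0 < 1 -> f x0 = 0 -> g x0 = 0 -> forall e, 0 < e <= x0 -> f e = 0.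
Proof.
  intros Hf Hg Heq Hka HH x0 Hx0 F0 G0 e He.
  exact (proj1 (uniq_gen2 f g g' H ka Hf Hg Heq Hka HH x0 Hx0 F0 G0 e He)).
Qed.

Lemma ex_kF x : ex_derive (fun x => kF (s x) (t x)) x.
Proof. unfold kF. auto_derive. side; try apply exs; try apply ext. Qed.
Lemma ex_kG x : ex_derive (fun x => kG (s x) (t x)) x.
Proof. unfold kG. auto_derive. side; try apply exs; try apply ext. Qed.
Lemma ex_kR x : ex_derive (fun x => kR (s x) (t x)) x.
Proof. unfold kR. auto_derive. side; try apply exs; try apply ext. Qed.

Lemma dr x : is_derive (fun x => s x + t x) x (Derive s x + Derive t x).
Proof. exact (is_derive_plus _ _ _ _ _ (ds x) (dt x)). Qed.
Lemma ddr x : is_derive (fun x => Derive s x + Derive t x) x (Derive (Derive s) x + Derive (Derive t) x).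
Proof. exact (is_derive_plus _ _ _ _ _ (dds x) (ddt x)). Qed.
Lemma dmt x : is_derive (fun x => - t x) x (- Derive t x).
Proof. exact (is_derive_opp _ _ _ (dt x)). Qed.
Lemma ddmt x : is_derive (fun x => - Derive t x) x (- Derive (Derive t) x).
Proof. exact (is_derive_opp _ _ _ (ddt x)). Qed.

Lemma eqrf x : 0 < x < 1 -> Derive (Derive s) x + Derive (Derive t) x =
  al x * (Derive s x + Derive t x) - be x * (Fe (s x) (t x) + Ge (s x) (t x)).
Proof. intros Hx. rewrite eq3f, eq4f by auto. ring. Qed.
Lemma eqmtf x : 0 < x < 1 -> - Derive (Derive t) x = al x * (- Derive t x) - be x * (- Ge (s x) (t x)).
Proof. intros Hx. rewrite eq4f by auto. ring. Qed.

Lemma phi1_pos x : 0 < phi1 I1 I2 x.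
Proof. unfold phi1. apply Rdiv_lt_0_compat; auto. Qed.
Lemma phi2_pos x : 0 < phi2 I2 I3 x.
Proof. unfold phi2. apply Rdiv_lt_0_compat; auto. Qed.

Lemma part2 : phi1 I1 I2 0 < 1 -> phi1 I1 I2 0 * phi2 I2 I3 0 < 1 ->
  1 < phi1 I1 I2 0 + phi1 I1 I2 0 * phi2 I2 I3 0 -> phi2 I2 I3 0 <> 1 ->
  phi1 I1 I2 1 = 1 -> phi2 I2 I3 1 = 1 ->
  forall x, 0 < x < 1 -> Derive s x <> 0 /\ Derive t x <> 0 /\ Derive s x + Derive t x <> 0.
Proof.
  intros Hp Hpq Hsum Hq1 E1 E2.
  pose proof (phi1_pos 0) as pp0. pose proof (phi2_pos 0) as pq0.
  assert (s0 : s 0 < 0). { unfold y2. rewrite <- ln_1 at 2. apply ln_increasing; lra. }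
  assert (r0 : s 0 + t 0 < 0).
  { unfold y2, y3. rewrite <- ln_mult by auto. rewrite <- ln_1 at 3. apply ln_increasing; auto.
    apply Rmult_lt_0_compat; auto. }
  assert (s1 : s 1 = 0). { unfold y2. rewrite E1. apply ln_1. }
  assert (t1 : t 1 = 0). { unfold y3. rewrite E2. apply ln_1. }
  assert (t0 : t 0 <> 0).
  { unfold y3. intro E. apply Hq1. apply ln_inv; auto; [lra|]. rewrite E, ln_1. reflexivity. }
  destruct (continuity_ab_maj s 0 1 ltac:(lra) (fun c _ => cont_of_derive _ _ _ (ds c))) as [m1 [Hm1 Im1]].
  destruct (continuity_ab_maj (fun x => s x + t x) 0 1 ltac:(lra) (fun c _ => cont_of_derive _ _ _ (dr c))) as [m2 [Hm2 Im2]].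
  assert (Smax : s m1 <= 0 /\ s m2 + t m2 <= 0).
  { destruct (Rle_dec (s m1) (s m2 + t m2)) as [Hle|Hlt].
    - destruct (Rle_dec (s m2 + t m2) 0) as [|Hpos]; [split; lra|exfalso].
      assert (Im2' : 0 < m2 < 1).
      { apply open_of; auto; intro E; subst; lra. }
      pose proof (core_max _ _ _ _ _ _ dr ddr eqrf be_pos m2 Im2' Hm2) as C.
      assert (s m2 <= s m1) by (apply Hm1; lra).
      pose proof (FG_neg (s m2) (t m2) ltac:(lra) ltac:(lra)). simpl in C. lra.
    - destruct (Rle_dec (s m1) 0) as [|Hpos]; [split; lra|exfalso].
      assert (Im1' : 0 < m1 < 1).
      { apply open_of; auto; intro E; subst; lra. }
      pose proof (core_max _ _ _ _ _ _ ds dds eq3f be_pos m1 Im1' Hm1) as C.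
      assert (s m1 + t m1 <= s m2 + t m2) by (apply (Hm2 m1); lra).
      pose proof (Fe_neg (s m1) (t m1) ltac:(lra) ltac:(lra)). simpl in C. lra. }
  assert (Sle : forall x, 0 <= x <= 1 -> s x <= 0) by (intros x Hx; specialize (Hm1 x Hx); lra).
  assert (Rle : forall x, 0 <= x <= 1 -> s x + t x <= 0) by (intros x Hx; specialize (Hm2 x Hx); simpl in Hm2; lra).
  assert (Hv0 : forall x, 0 < x < 1 -> 0 <= Derive s x).
  { apply (ch_gnonneg _ _ _ _ _ (fun x => Fe (s x) (t x)) ds dds eq3f be_pos Sle s1).
    intros x Hx Hn. apply Fe_pos; auto. apply Rle; lra. }
  assert (Hv : forall x, 0 < x < 1 -> 0 < Derive s x).
  { apply (ch_gpos _ _ _ _ _ (fun x => Fe (s x) (t x)) ds dds eq3f be_pos Sle Hv0 s0).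
    - intros x Hx Hn. apply Fe_pos; auto. apply Rle; lra.
    - apply (uniq_gen _ _ _ _ (fun x => kF (s x) (t x)) ds dds eq3f ex_kF).
      intros x. apply Fe_bnd. }
  assert (Hr0 : forall x, 0 < x < 1 -> 0 <= Derive s x + Derive t x).
  { apply (ch_gnonneg _ _ _ _ _ (fun x => Fe (s x) (t x) + Ge (s x) (t x)) dr ddr eqrf be_pos Rle ltac:(lra)).
    intros x Hx Hn. apply FG_pos; auto. apply Sle; lra. }
  assert (Hr : forall x, 0 < x < 1 -> 0 < Derive s x + Derive t x).
  { apply (ch_gpos _ _ _ _ _ (fun x => Fe (s x) (t x) + Ge (s x) (t x)) dr ddr eqrf be_pos Rle Hr0 r0).
    - intros x Hx Hn. apply FG_pos; auto. apply Sle; lra.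
    - apply (uniq_gen _ _ _ _ (fun x => kR (s x) (t x)) dr ddr eqrf ex_kR).
      intros x. apply FG_bnd. }
  assert (Hpsi : forall x, 0 <= x <= 1 -> 1 < exp (s x) + exp (s x) * exp (t x)).
  { intros x Hx.
    assert (P0 : exp (s 0) + exp (s 0) * exp (t 0) = phi1 I1 I2 0 + phi1 I1 I2 0 * phi2 I2 I3 0).
    { unfold y2, y3. rewrite !exp_ln; auto. }
    assert (exp (s 0) + exp (s 0) * exp (t 0) <= exp (s x) + exp (s x) * exp (t x)); [|lra].
    apply (mvt_nonneg (fun x => exp (s x) + exp (s x) * exp (t x))
      (fun z => exp (s z) * Derive s z + exp (s z) * exp (t z) * (Derive s z + Derive t z))); [lra| |].
    - intros z Hz. auto_derive.
      + side; try apply exs; try apply ext.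
      + replace (Derive (fun x0 => s x0) z) with (Derive s z) by reflexivity.
        replace (Derive (fun x0 => t x0) z) with (Derive t z) by reflexivity. ring.
    - intros z Hz. pose proof (Hv z ltac:(lra)). pose proof (Hr z ltac:(lra)).
      pose proof (exp_pos (s z)). pose proof (exp_pos (t z)).
      assert (0 < exp (s z) * exp (t z)) by (apply Rmult_lt_0_compat; auto).
      nra. }
  assert (Hw : forall x, 0 < x < 1 -> Derive t x <> 0).
  { destruct (Rlt_or_le (t 0) 0) as [tn|tp].
    - assert (Tle : forall x, 0 <= x <= 1 -> t x <= 0).
      { apply (ch_upper _ _ _ _ _ (fun x => Ge (s x) (t x)) dt ddt eq4f be_pos); [lra|lra|].
        intros x Hx Hpos. apply Ge_neg; auto. apply Hpsi; lra. }
      assert (Hw0 : forall x, 0 < x < 1 -> 0 <= Derive t x).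
      { apply (ch_gnonneg _ _ _ _ _ (fun x => Ge (s x) (t x)) dt ddt eq4f be_pos Tle t1).
        intros x Hx Hn. apply Ge_pos; auto. apply Hpsi; lra. }
      assert (Hw1 : forall x, 0 < x < 1 -> 0 < Derive t x).
      { apply (ch_gpos _ _ _ _ _ (fun x => Ge (s x) (t x)) dt ddt eq4f be_pos Tle Hw0 tn).
        - intros x Hx Hn. apply Ge_pos; auto. apply Hpsi; lra.
        - apply (uniq_gen _ _ _ _ (fun x => kG (s x) (t x)) dt ddt eq4f ex_kG).
          intros x. apply Ge_bnd. }
      intros x Hx. specialize (Hw1 x Hx). lra.
    - assert (tp' : 0 < t 0) by (destruct tp; auto; congruence).
      assert (Tle : forall x, 0 <= x <= 1 -> - t x <= 0).
      { apply (ch_upper _ _ _ _ _ (fun x => - Ge (s x) (t x)) dmt ddmt eqmtf be_pos); [lra|lra|].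
        intros x Hx Hpos. assert (0 < Ge (s x) (t x)); [|lra]. apply Ge_pos; [lra|]. apply Hpsi; lra. }
      assert (Hw0 : forall x, 0 < x < 1 -> 0 <= - Derive t x).
      { apply (ch_gnonneg _ _ _ _ _ (fun x => - Ge (s x) (t x)) dmt ddmt eqmtf be_pos Tle ltac:(lra)).
        intros x Hx Hn. assert (Ge (s x) (t x) < 0); [|lra]. apply Ge_neg; [lra|]. apply Hpsi; lra. }
      assert (Hw1 : forall x, 0 < x < 1 -> 0 < - Derive t x).
      { apply (ch_gpos _ _ _ _ _ (fun x => - Ge (s x) (t x)) dmt ddmt eqmtf be_pos Tle Hw0 ltac:(lra)).
        - intros x Hx Hn. assert (Ge (s x) (t x) < 0); [|lra]. apply Ge_neg; [lra|]. apply Hpsi; lra.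
        - apply (uniq_gen _ _ _ _ (fun x => kG (s x) (t x)) dmt ddmt eqmtf ex_kG).
          intros x. rewrite !Rabs_Ropp. apply Ge_bnd. }
      intros x Hx. specialize (Hw1 x Hx). lra. }
  intros x Hx. split; [specialize (Hv x Hx); lra|]. split; [apply Hw; auto|].
  specialize (Hr x Hx). lra.
Qed.


Definition hh x := Derive k x * ((1 - x ^ 2) ^ 2 / x).
Definition hd x := Derive (Derive k) x * ((1 - x ^ 2) ^ 2 / x) + Derive k x * (-(1 - x ^ 2) * (1 + 3 * x ^ 2) / x ^ 2).

Lemma dhh x : 0 < x -> is_derive hh x (hd x).
Proof.
  intros Hx. unfold hh, hd. auto_derive.
  - side; [apply exdk|lra].
  - replace (Derive (fun x0 => Derive k x0) x) with (Derive (Derive k) x) by reflexivity.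
    field. lra.
Qed.

Lemma Q_nonneg x : 0 <= Q x.
Proof. unfold Q. nra. Qed.
Lemma Q_zero x : Q x = 0 -> Derive s x = 0 /\ Derive t x = 0.
Proof.
  unfold Q. intros H. set (a := Derive s x) in *. set (b := Derive t x) in *.
  pose proof (pow2_ge_0 (2 * a + b)). pose proof (pow2_ge_0 b).
  assert (b ^ 2 = 0) by nra.
  assert (b = 0) by (destruct (Req_dec b 0); auto; exfalso; apply (pow_nonzero b 2); auto).
  subst b. assert (a ^ 2 = 0) by nra. split; auto.
  destruct (Req_dec a 0); auto; exfalso; apply (pow_nonzero a 2); auto.
Qed.

Lemma hd_nonpos x : 0 < x < 1 -> hd x <= 0.
Proof.
  intros Hx. unfold hd. rewrite eq1f by auto.
  replace ((/ x * (1 + 3 * x ^ 2) / (1 - x ^ 2) * Derive k x - 1 / 6 * Derive k x ^ 2 - 1 / 3 * Q x) *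
    ((1 - x ^ 2) ^ 2 / x) + Derive k x * (- (1 - x ^ 2) * (1 + 3 * x ^ 2) / x ^ 2))
    with (- ((1 - x ^ 2) ^ 2 / x) * (1 / 6 * Derive k x ^ 2 + 1 / 3 * Q x)) by (field; nra).
  assert (0 < (1 - x ^ 2) ^ 2 / x) by (apply Rdiv_lt_0_compat; [apply pow_lt; nra|lra]).
  pose proof (Q_nonneg x). pose proof (pow2_ge_0 (Derive k x)).
  assert (0 <= (1 / 6 * Derive k x ^ 2 + 1 / 3 * Q x)) by lra.
  nra.
Qed.

Lemma hh_nonneg x : 0 < x <= 1 -> 0 <= hh x.
Proof.
  intros Hx.
  assert (hh 1 <= hh x).
  { apply (mvt_nonpos hh hd x 1); [lra| |].
    - intros z Hz. apply dhh; lra.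
    - intros z Hz. apply hd_nonpos; lra. }
  assert (hh 1 = 0) by (unfold hh; field).
  lra.
Qed.

Lemma u_nonneg x : 0 < x < 1 -> 0 <= Derive k x.
Proof.
  intros Hx. pose proof (hh_nonneg x ltac:(lra)). unfold hh in H.
  assert (0 < (1 - x ^ 2) ^ 2 / x) by (apply Rdiv_lt_0_compat; [apply pow_lt; nra|lra]).
  nra.
Qed.

Lemma uz y : 0 < y < 1 -> Derive k y = 0 -> Derive s y = 0 /\ Derive t y = 0.
Proof.
  intros Hy Hu. apply Q_zero.
  assert (Derive (Derive k) y = 0).
  { apply (deriv_min0 (Derive k) y _ 0 1 (ddk y) Hy). intros z Hz. rewrite Hu. apply u_nonneg; auto. }
  rewrite eq1f in H by auto. rewrite Hu in H. pose proof (Q_nonneg y). nra.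
Qed.

Lemma part1 : KK I1 I2 I3 0 < 1 -> KK I1 I2 I3 1 = 1 -> phi1 I1 I2 1 = 1 -> phi2 I2 I3 1 = 1 ->
  forall x, 0 < x < 1 -> 0 < Derive k x.
Proof.
  intros HK0 HK1 E1 E2 x0 Hx0.
  destruct (Rlt_or_le 0 (Derive k x0)) as [|Hle]; auto. exfalso.
  assert (U0 : Derive k x0 = 0) by (pose proof (u_nonneg x0 Hx0); lra).
  assert (Uright : forall y, x0 <= y < 1 -> Derive k y = 0).
  { intros y Hy.
    assert (hh y <= hh x0).
    { apply (mvt_nonpos hh hd x0 y); [lra| |].
      - intros z Hz. apply dhh; lra.
      - intros z Hz. apply hd_nonpos; lra. }
    assert (hh x0 = 0) by (unfold hh; rewrite U0; ring).
    pose proof (hh_nonneg y ltac:(lra)).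
    assert (hh y = 0) by lra. unfold hh in H2.
    assert (0 < (1 - y ^ 2) ^ 2 / y) by (apply Rdiv_lt_0_compat; [apply pow_lt; nra|lra]).
    apply Rmult_integral in H2. destruct H2; auto. lra. }
  assert (VWright : forall y, x0 <= y < 1 -> Derive s y = 0 /\ Derive t y = 0).
  { intros y Hy. apply uz; [lra|]. apply Uright; auto. }
  assert (sx0 : s x0 = 0).
  { assert (s x0 <= s 1).
    { apply (mvt_nonneg s (Derive s) x0 1); [lra|intros; apply ds|].
      intros z Hz. rewrite (proj1 (VWright z ltac:(lra))). lra. }
    assert (s 1 <= s x0).
    { apply (mvt_nonpos s (Derive s) x0 1); [lra|intros; apply ds|].
      intros z Hz. rewrite (proj1 (VWright z ltac:(lra))). lra. }
    assert (s 1 = 0) by (unfold y2; rewrite E1; apply ln_1). lra. }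
  assert (tx0 : t x0 = 0).
  { assert (t x0 <= t 1).
    { apply (mvt_nonneg t (Derive t) x0 1); [lra|intros; apply dt|].
      intros z Hz. rewrite (proj2 (VWright z ltac:(lra))). lra. }
    assert (t 1 <= t x0).
    { apply (mvt_nonpos t (Derive t) x0 1); [lra|intros; apply dt|].
      intros z Hz. rewrite (proj2 (VWright z ltac:(lra))). lra. }
    assert (t 1 = 0) by (unfold y3; rewrite E2; apply ln_1). lra. }
  destruct (VWright x0 ltac:(lra)) as [V0 W0].
  assert (Sleft : forall e, 0 < e <= x0 -> Derive s e = 0).
  { intros e He. refine (proj2 (uniq_gen2 _ _ _ _ (fun x => kF (s x) (t x)) ds dds eq3f ex_kF _ x0 Hx0 sx0 V0 e He)).
    intros x. apply Fe_bnd. }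
  assert (Tleft : forall e, 0 < e <= x0 -> Derive t e = 0).
  { intros e He. refine (proj2 (uniq_gen2 _ _ _ _ (fun x => kG (s x) (t x)) dt ddt eq4f ex_kG _ x0 Hx0 tx0 W0 e He)).
    intros x. apply Ge_bnd. }
  assert (Uleft : forall e, 0 < e <= x0 -> Derive k e = 0).
  { intros e He.
    set (al1 := fun x => / x * (1 + 3 * x ^ 2) / (1 - x ^ 2) - 1/6 * Derive k x).
    destruct (bnd al1 e x0 ltac:(lra)) as [Ma HMa].
    { intros x Hx. unfold al1. auto_derive. side; try apply exdk; nra. }
    refine (proj2 (U2 (fun x => k x - k x0) (Derive k) (Derive (Derive k)) al1 (fun x => - (1/3) * Q x) e x0 Ma 0 ltac:(lra) _ ltac:(cbv beta; ring) U0 e ltac:(lra))).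
    intros x Hx. split; [|split; [apply ddk|split; [|split; [apply HMa; auto|]]]].
    - auto_derive; [apply exk|]. replace (Derive (fun x0 => k x0) x) with (Derive k x) by reflexivity. ring.
    - rewrite eq1f by lra. unfold al1. ring.
    - assert (Q x = 0) by (unfold Q; rewrite Sleft, Tleft by lra; ring).
      rewrite H, Rmult_0_r, Rabs_R0. lra. }
  assert (Uall : forall y, 0 < y < 1 -> Derive k y = 0).
  { intros y Hy. destruct (Rle_or_lt y x0). apply Uleft; lra. apply Uright; lra. }
  assert (k 0 = k 1).
  { assert (k 0 <= k 1) by (apply (mvt_nonneg k (Derive k) 0 1); [lra|intros; apply dk|intros z Hz; rewrite Uall; lra]).
    assert (k 1 <= k 0) by (apply (mvt_nonpos k (Derive k) 0 1); [lra|intros; apply dk|intros z Hz; rewrite Uall; lra]).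
    lra. }
  assert (k 1 = 0) by (unfold y1; rewrite HK1; apply ln_1).
  assert (KK I1 I2 I3 0 = 1).
  { rewrite <- (exp_ln (KK I1 I2 I3 0)). change (ln (KK I1 I2 I3 0)) with (k 0). rewrite H, H0. apply exp_0.
    unfold KK. repeat apply Rmult_lt_0_compat; auto. }
  lra.
Qed.

End M.

Theorem lemma3p1 (I1 I2 I3 : R -> R) (l1 l2 l3 : R) :
  (* the squashing factors I_i: smooth, positive, normalized at the center x = 1 *)
  smooth I1 -> smooth I2 -> smooth I3 ->
  (forall x, 0 < I1 x) -> (forall x, 0 < I2 x) -> (forall x, 0 < I3 x) ->
  I1 1 = 1 -> I2 1 = 1 -> I3 1 = 1 ->
  (* the boundary metric: lambda_i > 0 pairwise distinct *)
  0 < l1 -> 0 < l2 -> 0 < l3 -> l1 <> l2 -> l2 <> l3 -> l1 <> l3 ->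
  (* K(0) < 1 *)
  KK I1 I2 I3 0 < 1 ->
  (* the ODE system on (0,1) *)
  (forall x, 0 < x < 1 ->
     eq1 I1 I2 I3 x /\ eq2 I1 I2 I3 x /\ eq3 I1 I2 I3 x /\ eq4 I1 I2 I3 x) ->
  (* boundary conditions *)
  phi1 I1 I2 0 = l2 / l1 -> phi2 I2 I3 0 = l3 / l2 ->
  KK I1 I2 I3 1 = 1 -> phi1 I1 I2 1 = 1 -> phi2 I2 I3 1 = 1 ->
  Derive (y1 I1 I2 I3) 0 = 0 -> Derive (y2 I1 I2) 0 = 0 -> Derive (y3 I2 I3) 0 = 0 ->
  Derive (y1 I1 I2 I3) 1 = 0 -> Derive (y2 I1 I2) 1 = 0 -> Derive (y3 I2 I3) 1 = 0 ->
  (forall x, 0 < x < 1 -> 0 < Derive (y1 I1 I2 I3) x) /\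
  (phi1 I1 I2 0 < 1 -> phi1 I1 I2 0 * phi2 I2 I3 0 < 1 ->
   1 < phi1 I1 I2 0 + phi1 I1 I2 0 * phi2 I2 I3 0 ->
   forall x, 0 < x < 1 ->
     Derive (y2 I1 I2) x <> 0 /\ Derive (y3 I2 I3) x <> 0 /\
     Derive (y2 I1 I2) x + Derive (y3 I2 I3) x <> 0).
Proof.
  intros HS1 HS2 HS3 P1 P2 P3 _ _ _ Hl1 Hl2 Hl3 N12 N23 N13 HK0 HODE Ph10 Ph20 HK1 Ph11 Ph21 _ _ _ _ _ _.
  split.
  - apply (part1 I1 I2 I3 HS1 HS2 HS3 P1 P2 P3 HODE HK0 HK1 Ph11 Ph21).
  - intros Hp Hpq Hsum.
    apply (part2 I1 I2 I3 HS1 HS2 HS3 P1 P2 P3 HODE Hp Hpq Hsum); auto.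
    rewrite Ph20. intro E. apply N23. assert (HH : l3 = l3 / l2 * l2) by (field; lra). rewrite E in HH. lra.
Qed.
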